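(* For every finite-dimensional representation $\rho$ of $\mathrm{U}(n)$ and every weighted hypergraph $\Gamma=([n],w)$, the torus-invariant subspace $\mathrm{TorInv}(\rho)$ is invariant under ${\cal L}(\Gamma,\rho)$.
   Context: A weighted hypergraph $\Gamma=([n],w)$ assigns a weight $w_B$ to every $B\subseteq[n]$. $\mathrm{U}_B\le\mathrm{U}(n)$ is the subgroup of unitaries coinciding with the identity outside the minor with rows and columns in $B$, and $\mu_B$ its Haar probability measure; ${\cal L}(\Gamma,\rho)=\sum_Bw_B[I-\int_{\mathrm{U}_B}\rho(A)d\mu_B(A)]$. $T_n\le\mathrm{U}(n)$ is the subgroup of diagonal unitary matrices and, for $\rho\colon\mathrm{U}(n)\to\mathrm{GL}(V)$, $\mathrm{TorInv}(\rho)=\{v\in V:\rho(A)v=v\ \forall A\in T_n\}$. *)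

(* Defs.v *)
From HB Require Import structures.
From mathcomp Require Import all_boot all_order all_algebra.
From mathcomp Require Import all_classical all_reals all_analysis.
From mathcomp Require Import complex.
Set Implicit Arguments. Unset Strict Implicit. Unset Printing Implicit Defensive.
Import Order.TTheory GRing.Theory Num.Theory.
Import numFieldNormedType.Exports.
Local Open Scope classical_set_scope.
Local Open Scope ring_scope.

Section Defs.
Context {R : realType}.
Local Notation C := R[i].

Definition adjmx m n (A : 'M[C]_(m, n)) : 'M[C]_(n, m) := (map_mx (@conjc R) A)^T.

Definition unitary n (A : 'M[C]_n) : Prop := A *m adjmx A = 1%:M.

Definition UB n (B : {set 'I_n}) : set 'M[C]_n :=
  [set A | unitary A /\ forall i j : 'I_n, (i \notin B) || (j \notin B) ->
                           A i j = (i == j)%:R].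

Definition torus n : set 'M[C]_n := [set A | unitary A /\ is_diag_mx A].

(* Borel sigma-algebra on M_n(C) = R^{2 n^2}: generated by Re/Im of entries *)
Definition mx_gen n : set (set 'M[C]_n) :=
  [set S | exists (i j : 'I_n) (Bs : set R), measurable Bs /\
     (S = (fun A : 'M[C]_n => @complex.Re R (A i j)) @^-1` Bs \/
      S = (fun A : 'M[C]_n => @complex.Im R (A i j)) @^-1` Bs)].

Definition MxP n : Type := 'M[C]_n.
HB.instance Definition _ n := Choice.on (MxP n).
HB.instance Definition _ n := isPointed.Build (MxP n) (0 : 'M[C]_n).

Definition Mx n := g_sigma_algebraType (@mx_gen n : set (set (MxP n))).

Definition cintegral dd (T : measurableType dd) (mu : {measure set T -> \bar R})
  (D : set T) (f : T -> C) : C :=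
  Complex (Rintegral mu D (fun x => complex.Re (f x)))
          (Rintegral mu D (fun x => complex.Im (f x))).

Definition mxintegral dd (T : measurableType dd) (mu : {measure set T -> \bar R})
  p q (D : set T) (F : T -> 'M[C]_(p, q)) : 'M[C]_(p, q) :=
  \matrix_(k, l) cintegral mu D (fun x => F x k l).

Definition is_haar n (B : {set 'I_n}) (mu : probability (Mx n) R) : Prop :=
  (mu (UB B : set (Mx n)) = 1)%E /\
  forall g, UB B g -> forall E : set (Mx n), measurable E ->
    mu ((fun A : Mx n => g *m (A : 'M[C]_n)) @^-1` E) = mu E.

Definition is_rep n dim (rho : 'M[C]_n -> 'M[C]_dim) : Prop :=
  [/\ rho 1%:M = 1%:M,
      (forall A B, unitary A -> unitary B -> rho (A *m B) = rho A *m rho B),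
      (forall A, unitary A -> rho A \in unitmx) &
      (forall A, unitary A -> forall e : R, 0 < e -> exists2 del : R, 0 < del &
         forall B, unitary B -> (forall i j, `|B i j - A i j| < (del%:C)%C) ->
           forall k l, `|rho B k l - rho A k l| < (e%:C)%C)].

Definition TorInv n dim (rho : 'M[C]_n -> 'M[C]_dim) : set 'cV[C]_dim :=
  [set v | forall t, torus t -> rho t *m v = v].

Definition Lap n dim (w : {set 'I_n} -> R) (rho : 'M[C]_n -> 'M[C]_dim)
  (mu : forall B : {set 'I_n}, probability (Mx n) R) : 'M[C]_dim :=
  \sum_(B : {set 'I_n}) ((w B)%:C)%C *:
     (1%:M - mxintegral (mu B) (UB B : set (Mx n)) (fun A : Mx n => rho A)).

End Defs.

(* Main.v *)
Require Import Defs.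
From HB Require Import structures.
From mathcomp Require Import all_boot all_order all_algebra.
From mathcomp Require Import all_classical all_reals all_analysis.
From mathcomp Require Import complex.
From mathcomp Require Import measurable_realfun.
From mathcomp Require Import lra.
Import Order.TTheory GRing.Theory Num.Theory.
Local Open Scope classical_set_scope.
Local Open Scope ring_scope.
From mathcomp Require Import zify.

Section Aux.
Context {R : realType}.
Local Notation C := R[i].

Lemma bounded_of (T : Type) (A : set T) (f : T -> R) (K : R) :
  (forall x, A x -> `|f x| <= K) -> [bounded f x | x in A].
Proof.
move=> H; exists K; split; first exact: num_real.
move=> y Ky x Ax /=; apply: le_trans (H x Ax) _; exact: ltW.
Qed.

Definition nrm (z : C) : R := Num.sqrt (complex.Re z ^+ 2 + complex.Im z ^+ 2).

Lemma normC_nrm (z : C) : `|z| = (nrm z)%:C%C.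
Proof. by rewrite normc_def. Qed.

Lemma nrm_ge0 z : 0 <= nrm z.
Proof. exact: sqrtr_ge0. Qed.

Lemma ltC_nrm (z : C) (e : R) : (`|z| < e%:C%C) = (nrm z < e).
Proof. by rewrite normC_nrm ltcR. Qed.

Lemma Re_nrm (z : C) : `|complex.Re z| <= nrm z.
Proof.
rewrite /nrm -sqrtr_sqr; apply: ler_wsqrtr; rewrite lerDl; exact: sqr_ge0.
Qed.

Lemma Im_nrm (z : C) : `|complex.Im z| <= nrm z.
Proof.
rewrite /nrm -sqrtr_sqr; apply: ler_wsqrtr; rewrite lerDr; exact: sqr_ge0.
Qed.

Lemma nrm_le (z : C) : nrm z <= `|complex.Re z| + `|complex.Im z|.
Proof.
rewrite /nrm.
set a := complex.Re z; set b := complex.Im z.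
have h : a ^+ 2 + b ^+ 2 <= (`|a| + `|b|) ^+ 2.
  rewrite sqrrD -(real_normK (num_real a)) -(real_normK (num_real b)).
  rewrite -addrA lerD2l lerDr; apply: mulrn_wge0; exact: mulr_ge0.
apply: le_trans (ler_wsqrtr h) _.
by rewrite sqrtr_sqr ger0_norm // addr_ge0.
Qed.
Lemma nrmM (x y : C) : nrm (x * y) = nrm x * nrm y.
Proof.
have := normrM x y; rewrite !normC_nrm -rmorphM /=; by case.
Qed.

Lemma nrmD (x y : C) : nrm (x + y) <= nrm x + nrm y.
Proof.
have := ler_normD x y; rewrite !normC_nrm -rmorphD /= lecR //.
Qed.

Lemma nrm_conj (x : C) : nrm (x^*)%C = nrm x.
Proof. by case: x => a b; rewrite /nrm /= sqrrN. Qed.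

Lemma nrm_sum (I : Type) (r : seq I) (P : pred I) (F : I -> C) :
  nrm (\sum_(i <- r | P i) F i) <= \sum_(i <- r | P i) nrm (F i).
Proof.
elim/big_rec2: _ => [|i y z _ Hz]; first by rewrite /nrm /= expr0n /= addr0 sqrtr0.
by apply: le_trans (nrmD _ _) _; rewrite lerD2l.
Qed.

Lemma Re_sum (I : Type) (r : seq I) (P : pred I) (F : I -> C) :
  complex.Re (\sum_(i <- r | P i) F i) = \sum_(i <- r | P i) complex.Re (F i).
Proof. by apply: big_morph => // -[? ?] [? ?]. Qed.

Lemma Im_sum (I : Type) (r : seq I) (P : pred I) (F : I -> C) :
  complex.Im (\sum_(i <- r | P i) F i) = \sum_(i <- r | P i) complex.Im (F i).
Proof. by apply: big_morph => // -[? ?] [? ?]. Qed.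

Lemma mul_conj (z : C) : z * (z^*)%C = ((complex.Re z)^+2 + (complex.Im z)^+2)%:C%C.
Proof.
case: z => a b /=; apply/eqP; rewrite eq_complex /=; apply/andP; split; apply/eqP.
  by rewrite !expr2 mulrN opprK.
by rewrite mulrN mulrC addNr.
Qed.

End Aux.


Section Unit.
Context {R : realType}.
Local Notation C := R[i].

Lemma adjmxE n m (A : 'M[C]_(n,m)) i j : adjmx A i j = ((A j i)^*)%C.
Proof. by rewrite /adjmx !mxE. Qed.

Lemma adjmxM n (A B : 'M[C]_n) : adjmx (A *m B) = adjmx B *m adjmx A.
Proof. by rewrite /adjmx map_mxM trmx_mul. Qed.

Lemma adjmxK n (A : 'M[C]_n) : adjmx (adjmx A) = A.
Proof. by apply/matrixP => i j; rewrite !adjmxE conjcK. Qed.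

Lemma adjmx1 n : adjmx (1%:M : 'M[C]_n) = 1%:M.
Proof. by apply/matrixP => i j; rewrite !adjmxE !mxE eq_sym; case: eqP => _; rewrite ?conjc1 ?conjc0. Qed.

Lemma unitary_adj n (A : 'M[C]_n) : unitary A -> adjmx A *m A = 1%:M.
Proof. exact: mulmx1C. Qed.

Lemma unitary1 n : unitary (1%:M : 'M[C]_n).
Proof. by rewrite /unitary adjmx1 mul1mx. Qed.

Lemma unitaryM n (A B : 'M[C]_n) : unitary A -> unitary B -> unitary (A *m B).
Proof.
rewrite /unitary => hA hB; rewrite adjmxM mulmxA -(mulmxA A) hB mulmx1 //.
Qed.

Lemma unitary_adjmx n (A : 'M[C]_n) : unitary A -> unitary (adjmx A).
Proof. by move=> hA; rewrite /unitary adjmxK; exact: unitary_adj. Qed.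

Lemma unitary_entry n (A : 'M[C]_n) i j : unitary A -> nrm (A i j) <= 1.
Proof.
move=> hA.
have h1 : \sum_k (complex.Re (A i k) ^+ 2 + complex.Im (A i k) ^+ 2) = 1.
  have := congr1 (fun M : 'M[C]_n => complex.Re (M i i)) hA.
  rewrite /= !mxE eqxx /= Re_sum => <-; apply: eq_bigr => k _.
  by rewrite adjmxE mul_conj.
have h2 : complex.Re (A i j) ^+ 2 + complex.Im (A i j) ^+ 2 <= 1.
  rewrite -h1 (bigD1 j) //= lerDl; apply: sumr_ge0 => k _.
  by apply: addr_ge0; exact: sqr_ge0.
by rewrite /nrm -sqrtr1; apply: ler_wsqrtr.
Qed.

Lemma unitary_Re n (A : 'M[C]_n) i j : unitary A -> `|complex.Re (A i j)| <= 1.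
Proof. move=> hA; exact: le_trans (Re_nrm _) (unitary_entry _ A i j hA). Qed.

Lemma unitary_Im n (A : 'M[C]_n) i j : unitary A -> `|complex.Im (A i j)| <= 1.
Proof. move=> hA; exact: le_trans (Im_nrm _) (unitary_entry _ A i j hA). Qed.

End Unit.
Arguments unitary_adj {R n A}.
Arguments unitaryM {R n A B}.
Arguments unitary_adjmx {R n A}.
Arguments unitary_entry {R n A} i j.
Arguments unitary_Re {R n A} i j.
Arguments unitary_Im {R n A} i j.


Local Open Scope complex_scope.
Section UBsec.
Context {R : realType}.
Local Notation C := R[i].

Lemma sum_delta_l n (i : 'I_n) (F : 'I_n -> C) :
  \sum_k ((i == k)%:R * F k) = F i.
Proof.
rewrite (bigD1 i) //= eqxx mul1r big1 ?addr0 // => k /negbTE.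
by rewrite eq_sym => ->; rewrite mul0r.
Qed.

Lemma sum_delta_r n (j : 'I_n) (F : 'I_n -> C) :
  \sum_k (F k * (k == j)%:R) = F j.
Proof.
rewrite (bigD1 j) //= eqxx mulr1 big1 ?addr0 // => k /negbTE ->.
by rewrite mulr0.
Qed.

Variables (n : nat) (B : {set 'I_n}).
Implicit Types (g A : 'M[C]_n).

Lemma UB_mul {g A} : UB B g -> UB B A -> UB B (g *m A).
Proof.
move=> [ug hg] [uA hA]; split; first exact: unitaryM.
move=> i j hij; rewrite mxE.
case iB: (i \in B); last first.
  rewrite (eq_bigr (fun k => (i == k)%:R * A k j)); last first.
    by move=> k _; rewrite hg // iB.
  by rewrite sum_delta_l hA // iB.
have jB : j \notin B by move: hij; rewrite iB.
rewrite (eq_bigr (fun k => g i k * (k == j)%:R)); last first.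
  by move=> k _; rewrite hA // jB orbT.
by rewrite sum_delta_r hg // jB orbT.
Qed.

Lemma UB_adj {g} : UB B g -> UB B (adjmx g).
Proof.
move=> [ug hg]; split; first exact: unitary_adjmx.
move=> i j hij; rewrite adjmxE hg; last by rewrite orbC.
by rewrite eq_sym conjc_nat.
Qed.

Lemma UB1 : UB B (1%:M : 'M[C]_n).
Proof. by split; [exact: unitary1 | move=> i j _; rewrite mxE]. Qed.

Lemma UB_pre {g} : UB B g ->
  (fun A : 'M[C]_n => g *m A) @^-1` (UB B) = UB B.
Proof.
move=> hg; apply/seteqP; split => A /=; last exact: UB_mul.
move=> hgA; have := UB_mul (UB_adj hg) hgA.
by rewrite mulmxA (unitary_adj hg.1) mul1mx.
Qed.

Lemma unitary_diag (e : 'rV[C]_n) :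
  (forall i, e 0 i * (e 0 i)^* = 1) -> unitary (diag_mx e).
Proof.
move=> he; rewrite /unitary mul_diag_mx; apply/matrixP => i j.
rewrite !mxE eq_sym; case: eqP => [->|_]; first by rewrite mulr1n he.
by rewrite mulr0n conjc0 mulr0.
Qed.

Lemma unitary_diagP (e : 'rV[C]_n) i :
  unitary (diag_mx e) -> e 0 i * (e 0 i)^* = 1.
Proof.
by move=> /matrixP /(_ i i); rewrite mul_diag_mx !mxE eqxx mulr1n /=.
Qed.

Lemma diag_eq (t : 'M[C]_n) : is_diag_mx t -> t = diag_mx (\row_i t i i).
Proof.
move=> /is_diag_mxP ht; apply/matrixP => i j; rewrite !mxE.
by case: (eqVneq i j) => [->|ij]; rewrite ?mulr1n // mulr0n ht.
Qed.

Section Tor.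
Variable t : 'M[C]_n.
Hypothesis tt : torus t.

Definition tB : 'M[C]_n := diag_mx (\row_i (if i \in B then t i i else 1)).
Definition tC : 'M[C]_n := diag_mx (\row_i (if i \in B then 1 else t i i)).

Lemma t_entry i : t i i * (t i i)^* = 1.
Proof.
have h : unitary (diag_mx (\row_k t k k)) by rewrite -diag_eq; [exact: tt.1 | exact: tt.2].
by have := unitary_diagP _ i h; rewrite mxE.
Qed.

Lemma tBC : t = tB *m tC.
Proof.
rewrite /tB /tC mulmx_diag {1}(diag_eq _ tt.2); congr diag_mx.
by apply/matrixP => i j; rewrite !mxE; case: (j \in B); rewrite ?mulr1 ?mul1r.
Qed.

Lemma tB_UB : UB B tB.
Proof.
split.
  by apply: unitary_diag => i; rewrite mxE; case: (i \in B); rewrite ?t_entry // mul1r rmorph1.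
move=> i j hij; rewrite /tB !mxE.
case: (eqVneq i j) => [eij|nij]; last by rewrite !mulr0n.
move: hij; rewrite -eij orbb => /negbTE ->; by rewrite !mulr1n.
Qed.

Lemma tC_torus : torus tC.
Proof.
split; last exact: diag_mx_is_diag.
by apply: unitary_diag => i; rewrite mxE; case: (i \in B); rewrite ?t_entry // mul1r rmorph1.
Qed.

Lemma tC_comm (A : 'M[C]_n) : UB B A -> tC *m A = A *m tC.
Proof.
move=> [_ hA]; rewrite /tC mul_diag_mx mul_mx_diag; apply/matrixP => i j.
rewrite !mxE.
case iB: (i \in B); case jB: (j \in B); rewrite ?mul1r ?mulr1 //.
- rewrite hA ?jB ?orbT //; case: (eqVneq i j) => [eij|_]; last by rewrite mul0r.
  by move: iB jB; rewrite eij => ->.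
- rewrite hA ?iB //; case: (eqVneq i j) => [eij|_]; last by rewrite mulr0.
  by move: iB jB; rewrite eij => ->.
- rewrite hA ?iB //; case: (eqVneq i j) => [eij|_]; last by rewrite mulr0 mul0r.
  by rewrite eij mulrC.
Qed.

End Tor.
End UBsec.


Local Open Scope complex_scope.
Section Meas.
Context {R : realType}.
Local Notation C := R[i].
Variable n : nat.
Local Notation M := (@Mx R n).

Definition cmf (f : M -> C) :=
  measurable_fun [set: M] (fun A => complex.Re (f A)) /\
  measurable_fun [set: M] (fun A => complex.Im (f A)).

Lemma cmf_entry i j : cmf (fun A : M => (A : 'M[C]_n) i j).
Proof.
split => _ Y mY; rewrite setTI; apply: sub_sigma_algebra; exists i, j, Y;
  split => //; [left | right] => //.
Qed.

Lemma cmf_cst c : cmf (fun _ : M => c).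
Proof. by split; exact: measurable_cst. Qed.

Lemma cmfD f g : cmf f -> cmf g -> cmf (fun A => f A + g A).
Proof.
move=> [f1 f2] [g1 g2]; split.
  rewrite (_ : (fun A => _) = (fun A => complex.Re (f A) + complex.Re (g A))).
    exact: measurable_funD.
  by apply/funext => A; case: (f A); case: (g A).
rewrite (_ : (fun A => _) = (fun A => complex.Im (f A) + complex.Im (g A))).
  exact: measurable_funD.
by apply/funext => A; case: (f A); case: (g A).
Qed.

Lemma cmfM f g : cmf f -> cmf g -> cmf (fun A => f A * g A).
Proof.
move=> [f1 f2] [g1 g2]; split.
  rewrite (_ : (fun A => _) = (fun A => complex.Re (f A) * complex.Re (g A)
       - complex.Im (f A) * complex.Im (g A))).
    by apply: measurable_funB; exact: measurable_funM.
  by apply/funext => A; case: (f A); case: (g A).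
rewrite (_ : (fun A => _) = (fun A => complex.Re (f A) * complex.Im (g A)
       + complex.Im (f A) * complex.Re (g A))).
  by apply: measurable_funD; exact: measurable_funM.
by apply/funext => A; case: (f A) => a b; case: (g A) => c d /=; rewrite addrC.
Qed.

Lemma cmf_conj f : cmf f -> cmf (fun A => (f A)^*).
Proof.
move=> [f1 f2]; split.
  by rewrite (_ : (fun A => _) = (fun A => complex.Re (f A))) //;
    apply/funext => A; case: (f A).
rewrite (_ : (fun A => _) = (fun A => - complex.Im (f A))).
  exact: measurableT_comp.
by apply/funext => A; case: (f A).
Qed.

Lemma cmf_sum (I : Type) (r : seq I) (P : pred I) (F : I -> M -> C) :
  (forall i, cmf (F i)) -> cmf (fun A => \sum_(i <- r | P i) F i A).
Proof.
move=> hF; elim: r => [|x r IH].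
  by under eq_fun do rewrite big_nil; exact: cmf_cst.
under eq_fun do rewrite big_cons; case: (P x) => //.
exact: cmfD.
Qed.

Lemma cmf_level f c : cmf f -> measurable [set A : M | f A = c].
Proof.
move=> [f1 f2].
rewrite (_ : [set A | f A = c] = ([set: M] `&` (fun A => complex.Re (f A)) @^-1` [set complex.Re c])
    `&` ([set: M] `&` (fun A => complex.Im (f A)) @^-1` [set complex.Im c])).
  by apply: measurableI; [exact: f1 | exact: f2].
apply/seteqP; split => A /=.
  by move=> ->.
by case: (f A) => a b; case: c => c d /= [[_ ->] [_ ->]].
Qed.

Lemma cmf_mulmx (g : 'M[C]_n) i j : cmf (fun A : M => (g *m (A : 'M[C]_n)) i j).
Proof.
under eq_fun do rewrite mxE.
by apply: cmf_sum => k; apply: cmfM; [exact: cmf_cst | exact: cmf_entry].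
Qed.

Lemma cmf_adj i j : cmf (fun A : M => ((A : 'M[C]_n) *m adjmx (A : 'M[C]_n)) i j).
Proof.
under eq_fun do rewrite mxE.
apply: cmf_sum => k; apply: cmfM; first exact: cmf_entry.
under eq_fun do rewrite adjmxE.
exact/cmf_conj/cmf_entry.
Qed.

Lemma UB_measurable (B : {set 'I_n}) : measurable (UB B : set M).
Proof.
rewrite (_ : UB B = \bigcap_(ij in [set: 'I_n * 'I_n])
    ([set A : M | ((A : 'M[C]_n) *m adjmx (A : 'M[C]_n)) ij.1 ij.2 = (1%:M : 'M[C]_n) ij.1 ij.2] `&`
     (if (ij.1 \notin B) || (ij.2 \notin B) then [set A : M | (A : 'M[C]_n) ij.1 ij.2 = (ij.1 == ij.2)%:R]
      else [set: M]))).
  apply: fin_bigcap_measurable; first exact: finite_finset.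
  move=> [i j] _; apply: measurableI; first exact: (cmf_level _ _ (cmf_adj i j)).
  by case: ifP => _ //; exact: (cmf_level _ _ (cmf_entry i j)).
apply/seteqP; split => A /=.
  move=> [uA hA] [i j] _ /=; split; first by move/matrixP: uA => ->.
  by case: ifP => // /hA.
move=> h; split.
  by apply/matrixP => i j; have [] := h (i, j) I.
move=> i j hij; have [_] := h (i, j) I; by rewrite /= hij.
Qed.

Lemma mulmx_measurable (g : 'M[C]_n) :
  measurable_fun [set: M] (fun A : M => (g *m (A : 'M[C]_n) : M)).
Proof.
apply: (@measurability _ _ M M setT _ (@mx_gen R n) erefl).
move=> _ [S [i [j [Y [mY [->|->]]]]] <-]; rewrite setTI.
- by have [h _] := cmf_mulmx g i j; rewrite -[X in measurable X]setTI; exact: h.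
- by have [_ h] := cmf_mulmx g i j; rewrite -[X in measurable X]setTI; exact: h.
Qed.

End Meas.
Arguments cmf {R n}.
Arguments cmf_entry {R n}.
Arguments cmf_cst {R n}.
Arguments cmfD {R n}.
Arguments cmfM {R n}.
Arguments cmf_conj {R n}.
Arguments cmf_sum {R n}.
Arguments cmf_level {R n}.
Arguments cmf_mulmx {R n}.
Arguments cmf_adj {R n}.
Arguments UB_measurable {R n}.
Arguments mulmx_measurable {R n}.


Local Open Scope complex_scope.

Section Floor.
Context {R : realType}.
Lemma floor_close (x y : R) : Num.floor x = Num.floor y -> `|x - y| < 1.
Proof.
move=> h; have := floor_itv x; have := floor_itv y; rewrite h intrD.
set k := (Num.floor y)%:~R => /andP [h1 h2] /andP [h3 h4].
rewrite ltr_norml; apply/andP; split; lra.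
Qed.

Lemma floor_set (M : R) (k : int) : 0 < M ->
  [set x : R | Num.floor (M * x) = k] = `[k%:~R / M, (k + 1)%:~R / M[%classic.
Proof.
move=> M0; apply/seteqP; split => x /=; rewrite in_itv /=.
  move/eqP; rewrite floor_eq => /andP [h1 h2].
  by rewrite ler_pdivrMr // ltr_pdivlMr // ![x * M]mulrC h1 h2.
rewrite ler_pdivrMr // ltr_pdivlMr // ![x * M]mulrC => h.
by apply/eqP; rewrite floor_eq.
Qed.

Lemma ReB (x y : R[i]) : complex.Re (x - y) = complex.Re x - complex.Re y.
Proof. by case: x; case: y. Qed.
Lemma ImB (x y : R[i]) : complex.Im (x - y) = complex.Im x - complex.Im y.
Proof. by case: x; case: y. Qed.
End Floor.

Section MeasCont.
Context {R : realType}.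
Local Notation C := R[i].
Variable n : nat.
Local Notation M := (@Mx R n).

Lemma cmf_preRe (f : M -> C) (Y : set R) : cmf f -> measurable Y ->
  measurable ((fun A => complex.Re (f A)) @^-1` Y).
Proof. by move=> [h _] mY; have := h measurableT _ mY; rewrite setTI. Qed.
Lemma cmf_preIm (f : M -> C) (Y : set R) : cmf f -> measurable Y ->
  measurable ((fun A => complex.Im (f A)) @^-1` Y).
Proof. by move=> [_ h] mY; have := h measurableT _ mY; rewrite setTI. Qed.

Definition mcode (m : nat) (A : M) : {ffun 'I_n * 'I_n -> int * int} :=
  [ffun ij => (Num.floor (m.+1%:R * complex.Re ((A : 'M[C]_n) ij.1 ij.2)),
               Num.floor (m.+1%:R * complex.Im ((A : 'M[C]_n) ij.1 ij.2)))].

Definition cell m c : set M := [set A | mcode m A = c].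

Lemma cell_measurable m c : measurable (cell m c).
Proof.
have M0 : 0 < m.+1%:R :> R by [].
rewrite (_ : cell m c = \bigcap_(ij in [set: 'I_n * 'I_n])
   (((fun A : M => complex.Re ((A : 'M[C]_n) ij.1 ij.2)) @^-1`
        [set x | Num.floor (m.+1%:R * x) = (c ij).1]) `&`
    ((fun A : M => complex.Im ((A : 'M[C]_n) ij.1 ij.2)) @^-1`
        [set x | Num.floor (m.+1%:R * x) = (c ij).2]))).
  apply: fin_bigcap_measurable; first exact: finite_finset.
  move=> [i j] _ /=; rewrite !floor_set //; apply: measurableI.
  - exact: (cmf_preRe _ _ (cmf_entry i j) (measurable_itv _)).
  - exact: (cmf_preIm _ _ (cmf_entry i j) (measurable_itv _)).
apply/seteqP; split => A /=.
  by move=> <- ij _ /=; rewrite ffunE.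
move=> h; apply/ffunP => ij; rewrite ffunE; have [/= -> ->] := h ij I.
by case: (c ij).
Qed.

Lemma cell_close m (A B : M) i j : mcode m A = mcode m B ->
  nrm ((B : 'M[C]_n) i j - (A : 'M[C]_n) i j) < 2 / m.+1%:R.
Proof.
move=> /ffunP /(_ (i, j)); rewrite !ffunE => -[h1 h2].
have M0 : 0 < m.+1%:R :> R by [].
have c1 := floor_close _ _ h1; have c2 := floor_close _ _ h2.
rewrite -mulrBr normrM gtr0_norm // in c1.
rewrite -mulrBr normrM gtr0_norm // in c2.
apply: le_lt_trans (nrm_le _) _.
rewrite ReB ImB distrC [`|complex.Im _ - _|]distrC.
rewrite ltr_pdivlMr //; lra.
Qed.

Lemma meas_open (D : set M) (mD : measurable D) (h : M -> R) (a c : R) :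
  (forall A, D A -> forall e, 0 < e -> exists2 del, 0 < del &
     forall B, D B -> (forall i j, nrm ((B : 'M[C]_n) i j - (A : 'M[C]_n) i j) < del) ->
       `|h B - h A| < e) ->
  measurable (D `&` h @^-1` `]a, c[).
Proof.
move=> hc.
pose S (p : (nat * {ffun 'I_n * 'I_n -> int * int})%type) : set M :=
  [set A | cell p.1 p.2 A /\ (cell p.1 p.2 `&` D `<=` h @^-1` `]a, c[)].
have -> : D `&` h @^-1` `]a, c[ = D `&` \bigcup_p S p.
  apply/seteqP; split => A /=; last first.
    by move=> [DA [p _ [cA sub]]]; split => //; exact: sub.
  move=> [DA]; rewrite in_itv /= => /andP [ha hc'].
  have e0 : 0 < Num.min (h A - a) (c - h A) by rewrite lt_min !subr_gt0 ha hc'.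
  have [del del0 hdel] := hc A DA _ e0.
  pose m := Num.trunc (2 / del).
  have hm : 2 / m.+1%:R < del.
    by rewrite ltr_pdivrMr // mulrC -ltr_pdivrMr // truncnS_gt.
  split => //; exists (m, mcode m A) => //=; split => // B [cB DB].
  have := hdel B DB (fun i j => lt_trans (cell_close _ _ _ i j (esym cB)) hm).
  rewrite /= in_itv /= lt_min => /andP [].
  rewrite !ltr_norml => /andP [h1 _] /andP [_ h2].
  apply/andP; split; lra.
apply: measurableI => //; apply: countable_bigcupT_measurable.
  exact: countableP.
move=> p; have [sub|nsub] := pselect (cell p.1 p.2 `&` D `<=` h @^-1` `]a, c[).
  rewrite (_ : S p = cell p.1 p.2); first exact: cell_measurable.
  by apply/seteqP; split => A /=; [case | move=> ?; split].
rewrite (_ : S p = set0) //.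
by apply/seteqP; split => A //= [].
Qed.

Lemma meas_cont (D : set M) (mD : measurable D) (h : M -> R) :
  (forall A, D A -> forall e, 0 < e -> exists2 del, 0 < del &
     forall B, D B -> (forall i j, nrm ((B : 'M[C]_n) i j - (A : 'M[C]_n) i j) < del) ->
       `|h B - h A| < e) ->
  measurable_fun D h.
Proof.
move=> hc; apply: (@measurability _ _ M R D h (@ocitv R) erefl).
move=> _ [_ [[a b] _ <-] <-] /=.
have -> : D `&` h @^-1` `]a, b] =
    \bigcap_k (D `&` h @^-1` `]a, b + k.+1%:R^-1[).
  apply/seteqP; split => A /=.
    move=> [DA]; rewrite in_itv /= => /andP [h1 h2] k _; split => //.
    rewrite /preimage /= in_itv /= h1 /=; apply: le_lt_trans h2 _.
    by rewrite ltrDl invr_gt0.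
  move=> hk; have [DA hA0] := hk 0%N I; split => //.
  move: hA0; rewrite /preimage /= !in_itv /= => /andP [ha _].
  rewrite ha /=.
  rewrite leNgt; apply/negP => hb.
  pose k := Num.trunc ((h A - b)^-1).
  have := hk k I; rewrite /preimage /= in_itv /= => -[_ /andP [_ hlt]].
  have hb0 : 0 < h A - b by rewrite subr_gt0.
  have : k.+1%:R^-1 < h A - b.
    by rewrite -(invrK (h A - b)) ltf_pV2 ?posrE ?invr_gt0 // truncnS_gt.
  move=> hinv; move: hlt; rewrite -ltrBlDl => hlt.
  by have := lt_trans hlt hinv; rewrite ltxx.
apply: bigcapT_measurable => k; exact: meas_open.
Qed.

End MeasCont.
Arguments mcode {R n}.
Arguments cell {R n}.
Arguments cell_close {R n}.
Arguments meas_cont {R n}.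
Arguments cell_measurable {R n}.


Local Open Scope complex_scope.

Section Bound.
Context {R : realType}.
Local Notation C := R[i].

Lemma le_sum_term (I : finType) (F : I -> R) i :
  (forall j, 0 <= F j) -> F i <= \sum_j F j.
Proof.
move=> h; rewrite (bigD1 i) //= lerDl; exact: sumr_ge0.
Qed.

Lemma nrm_delta (T : eqType) (i j : T) : nrm ((i == j)%:R : C) <= 1.
Proof.
case: (i == j); rewrite /nrm /=.
  by rewrite expr1n expr0n /= addr0 sqrtr1.
by rewrite expr0n /= addr0 sqrtr0.
Qed.

Definition enc (M : nat) (z : int) : 'I_(M + M).+1 := inord (absz (z + M%:Z)).

Lemma enc_inj M z w : - (M%:Z) <= z <= M%:Z -> - (M%:Z) <= w <= M%:Z ->
  enc M z = enc M w -> z = w.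
Proof.
move=> /andP [z1 z2] /andP [w1 w2] /(congr1 val); rewrite /enc /= !inordK; last 2 first.
- by rewrite ltnS; lia.
- by rewrite ltnS; lia.
by move=> h; lia.
Qed.

Lemma floor_bound (M : nat) (x : R) : `|x| <= 1 ->
  - (M%:Z) <= Num.floor (M%:R * x) <= M%:Z.
Proof.
move=> hx; have hM : 0 <= M%:R :> R by [].
have h1 : - M%:R <= M%:R * x.
  rewrite -mulrN1 ler_wpM2l //; by move: hx; rewrite ler_norml => /andP [].
have h2 : M%:R * x <= M%:R.
  rewrite -[X in _ <= X]mulr1 ler_wpM2l //; by move: hx; rewrite ler_norml => /andP [].
apply/andP; split.
  by rewrite floor_ge_int; rewrite mulrNz.
rewrite -(ler_int R); apply: le_trans (floor_le _) _; done.
Qed.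

Variables (n : nat) (m : nat).
Local Notation MM := m.+1.

Definition fcode (A : 'M[C]_n) : {ffun 'I_n * 'I_n -> 'I_(MM + MM).+1 * 'I_(MM + MM).+1} :=
  [ffun ij => (enc MM (Num.floor (MM%:R * complex.Re (A ij.1 ij.2))),
               enc MM (Num.floor (MM%:R * complex.Im (A ij.1 ij.2))))].

Lemma fcode_code (A B : 'M[C]_n) : unitary A -> unitary B -> fcode A = fcode B ->
  mcode m (A : Mx n) = mcode m (B : Mx n).
Proof.
move=> uA uB /ffunP h; apply/ffunP => ij; have := h ij; rewrite !ffunE => -[e1 e2].
by congr pair; apply: (enc_inj _ _ _ _ _ e1) || apply: (enc_inj _ _ _ _ _ e2); apply: floor_bound;
  by [exact: unitary_Re | exact: unitary_Im].
Qed.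

End Bound.
Arguments fcode {R n} m A.
Arguments fcode_code {R n m A B}.

Lemma rep_bounded {R : realType} n dim (rho : 'M[R[i]]_n -> 'M[R[i]]_dim) :
  is_rep rho -> exists K, forall A, unitary A -> forall k l, nrm (rho A k l) <= K.
Proof.
move=> [r1 rM rinv rcont].
have [del del0 hdel] := rcont 1%:M (unitary1 n) 1 ltr01.
have near1 : forall X, unitary X -> (forall i j, nrm (X i j - (1%:M : 'M[R[i]]_n) i j) < del) ->
    forall k l, nrm (rho X k l) <= 2.
  move=> X uX hX k l.
  have h1 : forall i j, `|X i j - (1%:M : 'M[R[i]]_n) i j| < (del%:C)%C.
    by move=> i j; rewrite ltC_nrm; exact: hX.
  have := hdel X uX h1 k l; rewrite ltC_nrm r1 => h2.
  apply: le_trans (_ : nrm (rho X k l - (1%:M : 'M[R[i]]_dim) k l) + nrm ((1%:M : 'M[R[i]]_dim) k l) <= 2).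
    by rewrite -{1}(subrK ((1%:M : 'M[R[i]]_dim) k l) (rho X k l)); exact: nrmD.
  rewrite mxE in h2 *; apply: le_trans (lerD (ltW h2) (nrm_delta _ k l)) _; lra.
pose m := Num.trunc (n%:R * 2 / del).
have hm : n%:R * (2 / m.+1%:R) < del.
  by rewrite mulrA ltr_pdivrMr // [del * _]mulrC -ltr_pdivrMr // truncnS_gt.
have hex : forall c : {ffun 'I_n * 'I_n -> 'I_(m.+1 + m.+1).+1 * 'I_(m.+1 + m.+1).+1},
    exists A0 : 'M[R[i]]_n, (exists A, unitary A /\ @fcode R n m A = c) ->
      unitary A0 /\ @fcode R n m A0 = c.
  move=> c; have [[A hA]|h] := pselect (exists A, unitary A /\ @fcode R n m A = c).
    by exists A.
  by exists 1%:M.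
have [anchor hanc] := choice hex.
have hanchor : forall A, unitary A ->
    unitary (anchor (@fcode R n m A)) /\ @fcode R n m (anchor (@fcode R n m A)) = @fcode R n m A.
  by move=> A uA; apply: hanc; exists A.
pose K0 := \sum_c \sum_k \sum_l nrm (rho (anchor c) k l).
exists (2 * K0) => A uA k l.
have [uA0 fA0] := hanchor A uA; set A0 := anchor (@fcode R n m A) in uA0 fA0 *.
have eqc : mcode m (A0 : Mx n) = mcode m (A : Mx n) := fcode_code uA0 uA fA0.
pose X := adjmx A0 *m A.
have uX : unitary X := unitaryM (unitary_adjmx uA0) uA.
have AX : A = A0 *m X by rewrite /X mulmxA uA0 mul1mx.
have hX : forall i j, nrm (X i j - (1%:M : 'M[R[i]]_n) i j) < del.
  move=> i j.
  have : X - 1%:M = adjmx A0 *m (A - A0) by rewrite mulmxBr (unitary_adj uA0).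
  move/matrixP/(_ i j); rewrite !mxE => ->.
  apply: le_lt_trans (nrm_sum _ _ _ _) _; apply: le_lt_trans hm.
  rewrite (_ : n%:R * (2 / m.+1%:R) = \sum_(p < n) (2 / m.+1%:R)); last first.
    by rewrite sumr_const card_ord mulr_natl.
  apply: ler_sum => p _; rewrite !mxE ?adjmxE nrmM nrm_conj.
  rewrite -[X in _ <= X]mul1r; apply: ler_pM; [exact: nrm_ge0 | exact: nrm_ge0 | |].
    exact: unitary_entry.
  exact/ltW/(cell_close m (A0 : Mx n) (A : Mx n) p j).
have := rM A0 X uA0 uX; rewrite -AX => ->; rewrite mxE.
apply: le_trans (nrm_sum _ _ _ _) _.
apply: le_trans (_ : \sum_p nrm (rho A0 k p) * 2 <= _).
  apply: ler_sum => p _; rewrite nrmM; apply: ler_wpM2l; first exact: nrm_ge0.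
  exact: near1.
rewrite -mulr_suml mulrC ler_wpM2l //.
apply: le_trans (le_sum_term _ (fun k' => \sum_l nrm (rho A0 k' l)) k _) _.
  by move=> j; apply: sumr_ge0 => *; exact: nrm_ge0.
apply: (le_sum_term _ (fun c => \sum_k \sum_l nrm (rho (anchor c) k l)) (@fcode R n m A)).
by move=> c; apply: sumr_ge0 => *; apply: sumr_ge0 => *; exact: nrm_ge0.
Qed.


Local Open Scope complex_scope.

Section Integ.
Context {R : realType}.
Local Notation C := R[i].
Variables (n : nat) (B : {set 'I_n}) (mu : probability (@Mx R n) R).
Hypothesis hmu : is_haar B mu.
Local Notation M := (@Mx R n).
Local Notation D := (UB B : set M).

Let mD : measurable D := UB_measurable B.

Let muD : (mu D < +oo)%E.
Proof. by rewrite hmu.1 ltry. Qed.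

Definition rgood (h : M -> R) :=
  measurable_fun D h /\ exists K, forall A, D A -> `|h A| <= K.

Lemma rgood_int h : rgood h -> mu.-integrable D (EFin \o h).
Proof.
move=> [mh [K hK]]; apply: measurable_bounded_integrable => //.
exact: bounded_of hK.
Qed.

Lemma rgoodD h1 h2 : rgood h1 -> rgood h2 -> rgood (fun A => h1 A + h2 A).
Proof.
move=> [m1 [K1 h1K]] [m2 [K2 h2K]]; split; first exact: measurable_funD.
exists (K1 + K2) => A DA; apply: le_trans (ler_normD _ _) _.
by apply: lerD; [exact: h1K | exact: h2K].
Qed.

Lemma rgoodZ (k : R) h : rgood h -> rgood (fun A => k * h A).
Proof.
move=> [m1 [K1 h1K]]; split.
  by apply: measurable_funM => //; exact: measurable_cst.
exists (`|k| * K1) => A DA; rewrite normrM; apply: ler_wpM2l => //; exact: h1K.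
Qed.

Lemma rgoodN h : rgood h -> rgood (fun A => - h A).
Proof.
move=> hh; have := rgoodZ (-1) _ hh.
by rewrite (_ : (fun A => -1 * h A) = (fun A => - h A)) //; apply/funext => A; rewrite mulN1r.
Qed.

Lemma rgood0 : rgood (fun _ => 0).
Proof. split; first exact: measurable_cst. by exists 0 => A _; rewrite normr0. Qed.

Lemma RintD h1 h2 : rgood h1 -> rgood h2 ->
  Rintegral mu D (fun A => h1 A + h2 A) = Rintegral mu D h1 + Rintegral mu D h2.
Proof. by move=> g1 g2; apply: RintegralD => //; exact: rgood_int. Qed.

Lemma RintZ k h : rgood h ->
  Rintegral mu D (fun A => k * h A) = k * Rintegral mu D h.
Proof. by move=> g; apply: RintegralZl => //; exact: rgood_int. Qed.

Lemma Rint0 : Rintegral mu D (fun _ => 0) = 0.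
Proof. by rewrite Rintegral_cst // mul0r. Qed.

Lemma Rint_inv (g : 'M[C]_n) h : UB B g -> rgood h ->
  Rintegral mu D (fun A : M => h (g *m (A : 'M[C]_n) : M)) = Rintegral mu D h.
Proof.
move=> gU [mh [K hK]].
pose phi := fun A : M => (g *m (A : 'M[C]_n) : M).
have mphi : measurable_fun [set: M] phi := mulmx_measurable g.
pose H := ((h : M -> measurableTypeR R) \_ D).
have mH : measurable_fun [set: M] H by apply/(measurable_restrictT _ mD).
have HD : forall A, D A -> H A = h A.
  by move=> A DA; rewrite /H patchT // inE.
have phiD : phi @^-1` D = D by exact: UB_pre.
have -> : Rintegral mu D (fun A => h (phi A)) = Rintegral mu D (fun A => H (phi A)).
  apply: eq_Rintegral => A; rewrite inE => DA; apply: esym; apply: HD.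
  by rewrite -phiD in DA.
rewrite [RHS](_ : _ = Rintegral mu D H); last first.
  by apply: eq_Rintegral => A; rewrite inE => DA; apply: esym; apply: HD.
rewrite /Rintegral; congr fine.
have intf : mu.-integrable (phi @^-1` D) ((EFin \o H) \o phi).
  rewrite phiD; apply: (@rgood_int (fun A => H (phi A))); split.
    exact/measurable_funTS/measurableT_comp.
  exists K => A DA; rewrite HD; first by apply: hK; rewrite -phiD in DA.
  by rewrite -phiD in DA.
have := integral_pushforward mphi (proj2 (measurable_EFinP _ _) mH) intf mD.
rewrite phiD => <-.
apply: eq_measure_integral => A mA AD.
by rewrite /pushforward; apply: (hmu.2 g gU).
Qed.


Definition good (f : M -> C) :=
  rgood (fun A => complex.Re (f A)) /\ rgood (fun A => complex.Im (f A)).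

Local Notation cint f := (cintegral mu D f).

Lemma good0 : good (fun _ => 0).
Proof. by split; exact: rgood0. Qed.

Lemma goodD f g : good f -> good g -> good (fun A => f A + g A).
Proof.
move=> [f1 f2] [g1 g2]; split.
  rewrite (_ : (fun A => _) = (fun A => complex.Re (f A) + complex.Re (g A))).
    exact: rgoodD.
  by apply/funext => A; case: (f A); case: (g A).
rewrite (_ : (fun A => _) = (fun A => complex.Im (f A) + complex.Im (g A))).
  exact: rgoodD.
by apply/funext => A; case: (f A); case: (g A).
Qed.

Lemma ReM (c z : C) : complex.Re (c * z) =
  complex.Re c * complex.Re z + (- complex.Im c) * complex.Im z.
Proof. by case: c; case: z => *; rewrite /= mulNr. Qed.

Lemma ImM (c z : C) : complex.Im (c * z) =
  complex.Re c * complex.Im z + complex.Im c * complex.Re z.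
Proof. by case: c; case: z => *. Qed.

Lemma goodZ c f : good f -> good (fun A => c * f A).
Proof.
move=> [f1 f2]; split.
  rewrite (_ : (fun A => _) = (fun A => complex.Re c * complex.Re (f A) +
     (- complex.Im c) * complex.Im (f A))).
    by apply: rgoodD; exact: rgoodZ.
  by apply/funext => A; rewrite ReM.
rewrite (_ : (fun A => _) = (fun A => complex.Re c * complex.Im (f A) +
   complex.Im c * complex.Re (f A))).
  by apply: rgoodD; exact: rgoodZ.
by apply/funext => A; rewrite ImM.
Qed.

Lemma good_sum (I : Type) (r : seq I) (P : pred I) (F : I -> M -> C) :
  (forall i, good (F i)) -> good (fun A => \sum_(i <- r | P i) F i A).
Proof.
move=> hF; elim: r => [|x r IH].
  by under eq_fun do rewrite big_nil; exact: good0.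
under eq_fun do rewrite big_cons; case: (P x) => //.
exact: goodD.
Qed.

Lemma cint_eq f g : (forall A, D A -> f A = g A) -> cint f = cint g.
Proof.
move=> h; rewrite /cintegral; congr Complex; apply: eq_Rintegral => A;
  by rewrite inE => DA; rewrite h.
Qed.

Lemma cint0 : cint (fun _ => 0) = 0.
Proof. by rewrite /cintegral /= !Rint0. Qed.

Lemma cintD f g : good f -> good g -> cint (fun A => f A + g A) = cint f + cint g.
Proof.
move=> [f1 f2] [g1 g2]; rewrite /cintegral /=.
have -> : (fun A => complex.Re (f A + g A)) =
    (fun A => complex.Re (f A) + complex.Re (g A)).
  by apply/funext => A; case: (f A); case: (g A).
have -> : (fun A => complex.Im (f A + g A)) =
    (fun A => complex.Im (f A) + complex.Im (g A)).
  by apply/funext => A; case: (f A); case: (g A).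
by rewrite !RintD.
Qed.

Lemma cintZ c f : good f -> cint (fun A => c * f A) = c * cint f.
Proof.
move=> [f1 f2]; rewrite /cintegral /=.
have -> : (fun A => complex.Re (c * f A)) = (fun A => complex.Re c * complex.Re (f A) +
     (- complex.Im c) * complex.Im (f A)).
  by apply/funext => A; rewrite ReM.
have -> : (fun A => complex.Im (c * f A)) = (fun A => complex.Re c * complex.Im (f A) +
   complex.Im c * complex.Re (f A)).
  by apply/funext => A; rewrite ImM.
rewrite !RintD; try by apply: rgoodZ.
rewrite !RintZ //; case: c => a b /=.
by apply/eqP; rewrite eq_complex /= !mulNr !eqxx.
Qed.

Lemma cint_sum (I : Type) (r : seq I) (P : pred I) (F : I -> M -> C) :
  (forall i, good (F i)) ->
  cint (fun A => \sum_(i <- r | P i) F i A) = \sum_(i <- r | P i) cint (F i).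
Proof.
move=> hF; elim: r => [|x r IH].
  by rewrite big_nil; under eq_fun do rewrite big_nil; exact: cint0.
rewrite big_cons; under eq_fun do rewrite big_cons; case: (P x) => //.
by rewrite cintD ?IH //; exact: good_sum.
Qed.

Lemma cint_inv (g : 'M[C]_n) f : UB B g -> good f ->
  cint (fun A : M => f (g *m (A : 'M[C]_n) : M)) = cint f.
Proof.
move=> gU [f1 f2]; rewrite /cintegral.
rewrite (Rint_inv _ (fun A => complex.Re (f A)) gU f1).
by rewrite (Rint_inv _ (fun A => complex.Im (f A)) gU f2).
Qed.

Lemma mxint_mull p q r (X : 'M[C]_(p, q)) (F : M -> 'M[C]_(q, r)) :
  (forall i j, good (fun A => F A i j)) ->
  X *m mxintegral mu D F = mxintegral mu D (fun A => X *m F A).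
Proof.
move=> hF; apply/matrixP => i j; rewrite !mxE.
rewrite (_ : (fun A => (X *m F A) i j) = (fun A => \sum_k X i k * F A k j)); last first.
  by apply/funext => A; rewrite mxE.
rewrite cint_sum; last by move=> k; exact: goodZ.
by apply: eq_bigr => k _; rewrite cintZ // mxE.
Qed.

Lemma mxint_mulr p q r (F : M -> 'M[C]_(p, q)) (v : 'M[C]_(q, r)) :
  (forall i j, good (fun A => F A i j)) ->
  mxintegral mu D F *m v = mxintegral mu D (fun A => F A *m v).
Proof.
move=> hF; apply/matrixP => i j; rewrite !mxE.
rewrite (_ : (fun A => (F A *m v) i j) = (fun A => \sum_k v k j * F A i k)); last first.
  by apply/funext => A; rewrite mxE; apply: eq_bigr => k _; rewrite mulrC.
rewrite cint_sum; last by move=> k; exact: goodZ.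
by apply: eq_bigr => k _; rewrite cintZ // mxE mulrC.
Qed.

Lemma mxint_eq p q (F G : M -> 'M[C]_(p, q)) :
  (forall A, D A -> F A = G A) -> mxintegral mu D F = mxintegral mu D G.
Proof.
move=> h; apply/matrixP => i j; rewrite !mxE; apply: cint_eq => A DA.
by rewrite h.
Qed.

Lemma mxint_inv p q (g : 'M[C]_n) (F : M -> 'M[C]_(p, q)) : UB B g ->
  (forall i j, good (fun A => F A i j)) ->
  mxintegral mu D (fun A : M => F (g *m (A : 'M[C]_n) : M)) = mxintegral mu D F.
Proof.
move=> gU hF; apply/matrixP => i j; rewrite !mxE.
exact: (cint_inv g (fun A => F A i j) gU (hF i j)).
Qed.

End Integ.


Local Open Scope complex_scope.

Lemma good_rho {R : realType} n dim (rho : 'M[R[i]]_n -> 'M[R[i]]_dim) (B : {set 'I_n}) :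
  is_rep rho -> forall k l, good n B (fun A : Mx n => rho A k l).
Proof.
move=> hr k l; have [r1 rM rinv rcont] := hr.
have [K hK] := rep_bounded _ _ _ hr.
have cont : forall (pr : R[i] -> R),
    (forall z, `|pr z| <= nrm z) -> (forall x y, pr (x - y) = pr x - pr y) ->
    rgood n B (fun A : Mx n => pr (rho A k l)).
  move=> pr hpr hpB; split; last first.
    by exists K => A [uA _]; apply: le_trans (hpr _) (hK A uA k l).
  apply: meas_cont; first exact: UB_measurable.
  move=> A [uA _] e e0; have [del del0 hdel] := rcont A uA e e0.
  exists del => // B' [uB _] hB.
  have h1 : forall i j, `|(B' : 'M[R[i]]_n) i j - (A : 'M[R[i]]_n) i j| < del%:C.
    by move=> i j; rewrite ltC_nrm; exact: hB.
  have := hdel B' uB h1 k l; rewrite ltC_nrm -hpB => h2.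
  exact: le_lt_trans (hpr _) h2.
split; apply: cont.
- exact: Re_nrm.
- exact: ReB.
- exact: Im_nrm.
- exact: ImB.
Qed.

Theorem proposition3p1 (R : realType) (n dim : nat)
  (rho : 'M[R[i]]_n -> 'M[R[i]]_dim) (w : {set 'I_n} -> R)
  (mu : forall B : {set 'I_n}, probability (@Mx R n) R) :
  is_rep rho ->
  (forall B, is_haar B (mu B)) ->
  forall v, TorInv rho v -> TorInv rho (Lap w rho mu *m v).
Proof.
move=> hr hmu v hv t tt; have [r1 rM rinv rcont] := hr.
have claim : forall B, rho t *m (mxintegral (mu B) (UB B : set (Mx n)) (fun A : Mx n => rho A) *m v)
    = mxintegral (mu B) (UB B : set (Mx n)) (fun A : Mx n => rho A) *m v.
  move=> B.
  have gR : forall i j, good n B (fun A : Mx n => rho A i j) by move=> i j; exact: good_rho.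
  have gF : forall i j, good n B (fun A : Mx n => (rho A *m v) i j).
    move=> i j.
    rewrite (_ : (fun A : Mx n => (rho A *m v) i j) = (fun A => \sum_k v k j * rho A i k)).
      by apply: good_sum => k; apply: goodZ; exact: gR.
    by apply/funext => A; rewrite mxE; apply: eq_bigr => k _; rewrite mulrC.
  rewrite (mxint_mulr _ _ _ (hmu B) _ _ _ _ _ gR) (mxint_mull _ _ _ (hmu B) _ _ _ (rho t) _ gF).
  rewrite (mxint_eq _ _ _ _ _ _ (fun A : Mx n => rho (tB n B t *m (A : 'M[R[i]]_n)) *m v)); last first.
    move=> A [uA hA]; rewrite mulmxA -rM //; last exact: tt.1.
    rewrite {1}(tBC n B t tt) -mulmxA tC_comm; last by split.
    rewrite mulmxA rM //; first by rewrite -mulmxA (hv _ (tC_torus n B t tt)).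
      exact: unitaryM (tB_UB n B t tt).1 uA.
    exact: (tC_torus n B t tt).1.
  exact: (mxint_inv _ _ _ (hmu B) _ _ _ (fun A : Mx n => rho A *m v) (tB_UB n B t tt) gF).
rewrite /Lap !mulmx_suml mulmx_sumr; apply: eq_bigr => B _.
by rewrite -!scalemxAl -scalemxAr mulmxBl mul1mx mulmxBr (hv t tt) claim.
Qed.
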